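(* There exists a locally convex topology $\tau$ on the closed unit ball $B_{c_0}$ of $c_0$, containing the weak topology of $B_{c_0}$, such that $B_{c_0}$ is $\tau$-strongly regular for open subsets, while every nonempty $\tau$-open subset of $B_{c_0}$ has (norm) diameter $2$.
   Context: $c_0$ carries its usual sup norm. Locally convex means having a basis of convex open sets. For $O\subset B_{c_0}$, $\tau|_O$ denotes the induced topology. $B_{c_0}$ is $\tau$-strongly regular for open subsets if for every nonempty convex $\tau$-open subset $O$ of $B_{c_0}$ and every $\varepsilon>0$ there is a convex combination (Minkowski sum $\sum_i\lambda_iU_i$, $\lambda_i\ge0$, $\sum\lambda_i=1$) of nonempty $\tau|_O$-open sets $U_i$ with norm diameter less than $\varepsilon$. *)

(* Defs.v *)
From mathcomp Require Import all_boot all_order all_algebra.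
From mathcomp Require Import boolp classical_sets reals.
Set Implicit Arguments. Unset Strict Implicit. Unset Printing Implicit Defensive.
Import Order.TTheory GRing.Theory Num.Theory.
Local Open Scope classical_set_scope.
Local Open Scope ring_scope.

Section C0.
Variable R : realType.

Definition c0 (x : nat -> R) : Prop :=
  forall e : R, 0 < e -> exists N : nat, forall n : nat, (N <= n)%N -> `|x n| < e.

Definition c0norm (x : nat -> R) : R := sup [set `|x n| | n in [set: nat]].

Definition Bc0 : set (nat -> R) := [set x | c0 x /\ c0norm x <= 1].

Definition diam (A : set (nat -> R)) : R :=
  sup [set d | exists x y, A x /\ A y /\ d = c0norm (fun n => x n - y n)].

Definition convex_set (A : set (nat -> R)) : Prop :=
  forall x y (t : R), A x -> A y -> 0 <= t -> t <= 1 ->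
    A (fun n => t * x n + (1 - t) * y n).

Definition c0_dual (f : (nat -> R) -> R) : Prop :=
  (forall x y (a b : R), c0 x -> c0 y ->
     f (fun n => a * x n + b * y n) = a * f x + b * f y) /\
  exists C : R, forall x, c0 x -> `|f x| <= C * c0norm x.

Definition weak_open (U : set (nat -> R)) : Prop :=
  U `<=` Bc0 /\
  forall x, U x -> exists (k : nat) (f : nat -> (nat -> R) -> R) (e : R),
    0 < e /\ (forall i, (i < k)%N -> c0_dual (f i)) /\
    (forall y, Bc0 y -> (forall i, (i < k)%N -> `|f i y - f i x| < e) -> U y).

Definition is_topology_on_Bc0 (tau : set (set (nat -> R))) : Prop :=
  (forall U, tau U -> U `<=` Bc0) /\ tau set0 /\ tau Bc0 /\
  (forall U V, tau U -> tau V -> tau (U `&` V)) /\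
  (forall F : set (set (nat -> R)), F `<=` tau -> tau (\bigcup_(U in F) U)).

Definition locally_convex (tau : set (set (nat -> R))) : Prop :=
  forall U x, tau U -> U x ->
    exists V, tau V /\ convex_set V /\ V x /\ V `<=` U.

Definition rel_open (tau : set (set (nat -> R))) (O U : set (nat -> R)) : Prop :=
  exists W, tau W /\ U = O `&` W.

Definition mink_comb (k : nat) (lam : nat -> R) (Us : nat -> set (nat -> R))
  : set (nat -> R) :=
  [set z | exists u : nat -> nat -> R,
     (forall i, (i < k)%N -> Us i (u i)) /\
     z = (fun n => \sum_(i < k) lam i * u i n)].

Definition strongly_regular_open (tau : set (set (nat -> R))) : Prop :=
  forall O, tau O -> O !=set0 -> convex_set O ->
  forall e : R, 0 < e ->
    exists (k : nat) (lam : nat -> R) (Us : nat -> set (nat -> R)),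
      (forall i, (i < k)%N -> 0 <= lam i) /\
      \sum_(i < k) lam i = 1 /\
      (forall i, (i < k)%N -> rel_open tau O (Us i) /\ Us i !=set0) /\
      diam (mink_comb k lam Us) < e.

End C0.

(* Main.v *)
Require Import Defs.
From mathcomp Require Import all_boot all_order all_algebra.
From mathcomp Require Import boolp classical_sets reals.
From mathcomp Require Import ring lra zify.
Import Order.TTheory GRing.Theory Num.Theory.
Set Implicit Arguments. Unset Strict Implicit. Unset Printing Implicit Defensive.
Local Open Scope classical_set_scope.
Local Open Scope ring_scope.

Section S.
Variable R : realType.
Implicit Types x y z : nat -> R.

Lemma c0_bounded x : c0 x -> exists B : R, forall n, `|x n| <= B.
Proof.
move=> cx; have [N HN] := cx 1 ltr01.
exists (1 + \sum_(j < N) `|x j|) => n.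
case: (leqP N n) => hn.
  have h := HN n hn; rewrite -[`|x n|]addr0.
  apply: lerD; first exact: ltW h.
  by apply: sumr_ge0 => i _.
rewrite -[`|x n|]add0r; apply: lerD => //.
rewrite (bigD1 (Ordinal hn)) //= lerDl.
by apply: sumr_ge0 => i _.
Qed.

Lemma c0norm_ge x n : c0 x -> `|x n| <= c0norm x.
Proof.
move=> /c0_bounded [B HB].
apply: ub_le_sup; last by exists n.
by exists B => _ [m _ <-].
Qed.

Lemma c0norm_le x (b : R) : (forall n, `|x n| <= b) -> c0norm x <= b.
Proof.
move=> H; apply: ge_sup; first by exists `|x 0%N|, 0%N.
by move=> _ [m _ <-].
Qed.

Lemma c0_ev x y (N : nat) : c0 x -> (forall n, (N <= n)%N -> y n = x n) -> c0 y.
Proof.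
move=> cx H e e0; have [M HM] := cx e e0; exists (maxn N M) => n.
rewrite geq_max => /andP [h1 h2]; rewrite H //; exact: HM.
Qed.

Lemma c0_0 : c0 (fun _ : nat => (0 : R)).
Proof. by move=> e e0; exists 0%N => n _; rewrite normr0. Qed.

Lemma c0_fin x (N : nat) : (forall n, (N <= n)%N -> x n = 0) -> c0 x.
Proof. move=> H; apply: (c0_ev (N:=N) c0_0) => n /H. done. Qed.

Lemma c0_lin x y (a b : R) : c0 x -> c0 y -> c0 (fun n => a * x n + b * y n).
Proof.
move=> cx cy e e0.
have e1 : 0 < e / (2 * (`|a| + `|b| + 1)).
  by apply: divr_gt0 => //; apply: mulr_gt0 => //; apply: ltr_wpDl => //; apply: addr_ge0.
have [N1 H1] := cx _ e1; have [N2 H2] := cy _ e1.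
exists (maxn N1 N2) => n; rewrite geq_max => /andP [h1 h2].
have := H1 n h1; have := H2 n h2.
set c := e / (2 * (`|a| + `|b| + 1)) => hy hx.
have ce : c * (2 * (`|a| + `|b| + 1)) = e.
  rewrite /c mulfVK //; apply: lt0r_neq0; apply: mulr_gt0 => //.
  by apply: ltr_wpDl => //; apply: addr_ge0.
apply: (le_lt_trans (ler_normD _ _)); rewrite !normrM.
have ha : `|a| * `|x n| <= `|a| * c by apply: ler_wpM2l => //; apply: ltW.
have hb : `|b| * `|y n| <= `|b| * c by apply: ler_wpM2l => //; apply: ltW.
have c0 : 0 < c by [].
rewrite -ce. have : 0 <= `|a| by []. have : 0 <= `|b| by [].
move=> *; nra.
Qed.


Definition ev (m : nat) : nat -> R := fun n => if n == m then 1 else 0.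

Lemma fin_c0 (S : seq nat) x : (forall n, n \notin S -> x n = 0) -> c0 x.
Proof.
move=> H; apply: (c0_fin (N := (\max_(t <- S) t).+1)) => n hn; apply: H.
apply/negP => nS; have := @leq_bigmax_seq _ S xpredT (fun t => t) n nS isT.
by rewrite leqNgt hn.
Qed.

Lemma c0_ev1 m : c0 (ev m).
Proof. apply: (fin_c0 (S := [:: m])) => n; rewrite inE /ev => /negbTE -> //. Qed.

Lemma dual_lin f x y a b : c0_dual f -> c0 x -> c0 y ->
  f (fun n => a * x n + b * y n) = a * f x + b * f y.
Proof. by move=> [L _]; apply: L. Qed.

Lemma dual_add f x y : c0_dual f -> c0 x -> c0 y -> f (fun n => x n + y n) = f x + f y.
Proof.
move=> hf cx cy; have := dual_lin 1 1 hf cx cy; rewrite !mul1r => <-.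
by congr f; apply: funext => n; rewrite !mul1r.
Qed.

Lemma dual_scale f a x : c0_dual f -> c0 x -> f (fun n => a * x n) = a * f x.
Proof.
move=> hf cx; have := dual_lin a 0 hf cx cx; rewrite mul0r addr0 => <-.
by congr f; apply: funext => n; rewrite mul0r addr0.
Qed.

Lemma dual_sub f x y : c0_dual f -> c0 x -> c0 y -> f (fun n => x n - y n) = f x - f y.
Proof.
move=> hf cx cy; have := dual_lin 1 (-1) hf cx cy; rewrite !mul1r mulN1r => <-.
by congr f; apply: funext => n; rewrite !mul1r mulN1r.
Qed.

Lemma dual_fin f (S : seq nat) d : c0_dual f -> uniq S ->
  (forall n, n \notin S -> d n = 0) -> f d = \sum_(s <- S) d s * f (ev s).
Proof.
move=> hf; elim: S d => [|s S IH] d /=.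
  move=> _ H; rewrite big_nil.
  have -> : d = (fun n => 0 * (fun _ : nat => (0:R)) n).
    by apply: funext => n; rewrite mul0r H.
  by rewrite dual_scale // ?mul0r //; exact: c0_0.
move=> /andP [sS uS] H.
pose d' := fun n => if n == s then 0 else d n.
have Hd' : forall n, n \notin S -> d' n = 0.
  move=> n nS; rewrite /d'; case: eqP => // /eqP ns; apply: H.
  by rewrite inE negb_or ns.
have -> : f d = f (fun n => d' n + (fun k => d s * ev s k) n).
  congr f; apply: funext => n; rewrite /d' /ev; case: eqP => [->|_]; first by rewrite mulr1 add0r.
  by rewrite mulr0 addr0.
have cd' : c0 d' by exact: fin_c0 Hd'.
have ce : c0 (fun k => d s * ev s k).
  apply: (fin_c0 (S := [:: s])) => n; rewrite inE /ev => /negbTE ->; exact: mulr0.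
rewrite dual_add // dual_scale //; last exact: c0_ev1.
rewrite big_cons addrC; congr (_ + _).
rewrite (IH d' uS Hd'); apply: eq_big_seq => t tS; congr (_ * _).
rewrite /d'; case: eqP => // ts; by move: sS; rewrite -ts tS.
Qed.


Lemma sum_const_seq (S : seq nat) (c : R) : \sum_(t <- S) c = (size S)%:R * c.
Proof.
elim: S => [|s S IH]; first by rewrite big_nil mul0r.
by rewrite big_cons IH /= -addn1 natrD mulrDl mul1r addrC.
Qed.

Lemma incr_inj (s : nat -> nat) : (forall j, (s j < s j.+1)%N) -> injective s.
Proof.
move=> hs; have mono := homo_ltn ltn_trans hs.
move=> i j eij; case: (ltngtP i j) => // h; have := mono _ _ h; by rewrite eij ltnn.
Qed.

Lemma c0norm_ge0 x : c0 x -> 0 <= c0norm x.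
Proof. move=> cx; exact: le_trans (normr_ge0 (x 0%N)) (c0norm_ge 0 cx). Qed.

Lemma dual_decay f : c0_dual f -> forall eps : R, 0 < eps ->
  exists M, forall m, (M <= m)%N -> `|f (ev m)| < eps.
Proof.
move=> hf eps e0; apply: contrapT => Hn.
have H' : forall M, exists m, (M <= m)%N /\ eps <= `|f (ev m)|.
  move=> M; apply: contrapT => hn; apply: Hn; exists M => m hm.
  rewrite ltNge; apply/negP => he; apply: hn; by exists m.
have [nx hnx] := choice H'.
pose s j := iter j (fun a => nx a.+1) (nx 0%N).
have hs : forall j, (s j < s j.+1)%N.
  by move=> j; rewrite /s iterS; case: (hnx (s j).+1).
have sinj := incr_inj hs.
have sbad : forall j, eps <= `|f (ev (s j))|.
  case=> [|j]; rewrite /s ?iterS; [exact: (hnx 0%N).2 | exact: (hnx _).2].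
case: (hf) => _ [C HC].
pose K := Num.Def.archi_bound (`|C| / eps).
have hK : `|C| < K%:R * eps.
  have := archi_boundP (divr_ge0 (normr_ge0 C) (ltW e0)); by rewrite ltr_pdivrMr.
pose S := map s (iota 0 K).
have uS : uniq S by rewrite map_inj_uniq // iota_uniq.
pose w := fun n => if n \in S then Num.sg (f (ev n)) else 0.
have Hw : forall n, n \notin S -> w n = 0 by move=> n /negbTE; rewrite /w => ->.
have cw : c0 w := fin_c0 Hw.
have fw := dual_fin hf uS Hw.
have fw2 : f w = \sum_(t <- S) `|f (ev t)|.
  rewrite fw; apply: eq_big_seq => t tS; by rewrite /w tS -normrEsg.
have lo : K%:R * eps <= f w.
  rewrite fw2 -(size_iota 0 K) -(size_map s) -sum_const_seq.
  rewrite big_seq [leRHS]big_seq; apply: ler_sum => t; move/mapP => [j _ ->]; exact: sbad.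
have hi : f w <= `|C|.
  apply: le_trans (ler_norm _) _; apply: le_trans (HC _ cw) _.
  have n1 : c0norm w <= 1.
    apply: c0norm_le => n; rewrite /w; case: (n \in S); last by rewrite normr0.
    by rewrite normr_sg; case: (_ != 0).
  have n0 := c0norm_ge0 cw.
  apply: le_trans (_ : `|C| * c0norm w <= _).
    by apply: ler_wpM2r => //; exact: ler_norm.
  by rewrite -[leRHS]mulr1; apply: ler_wpM2l.
have := lt_le_trans hK (le_trans lo hi); by rewrite ltxx.
Qed.


Lemma decay_k k (f : nat -> (nat -> R) -> R) (eps : R) : 0 < eps ->
  (forall i, (i < k)%N -> c0_dual (f i)) ->
  exists M, forall i m, (i < k)%N -> (M <= m)%N -> `|f i (ev m)| < eps.
Proof.
move=> e0; elim: k => [|k IH] hf; first by exists 0%N.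
have [M1 H1] := IH (fun i hi => hf i (ltnW hi)).
have [M2 H2] := dual_decay (hf k (ltnSn k)) e0.
exists (maxn M1 M2) => i m; rewrite ltnS leq_eqVlt geq_max => /orP [/eqP ->|hi] /andP [h1 h2].
  exact: H2.
exact: H1.
Qed.

Definition bit (n m : nat) : bool := odd (n %/ 2 ^ m).
Definition freeH (H : seq (nat * bool)) (n : nat) : bool :=
  all (fun mb => (mb.1 < n)%N && (bit n mb.1 == mb.2)) H.
Definition vb (b : bool) : R := if b then 2^-1 else 0.
Definition admits x (H : seq (nat * bool)) (d : R) :=
  forall mb, mb \in H -> `|x mb.1 - vb mb.2| + d < 4^-1.

Fixpoint enc (l : seq bool) : nat := if l is b :: l' then b + (enc l').*2 else 1.

Lemma enc_bit l m : (m < size l)%N -> bit (enc l) m = nth false l m.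
Proof.
elim: l m => [|b l IH] [|m] //=.
  by move=> _; rewrite /bit expn0 divn1 oddD odd_double addbF; case: b.
rewrite ltnS => hm; rewrite -(IH m hm) /bit expnS divnMA divn2 half_bit_double //.
Qed.

Lemma enc_gt l : (size l < enc l)%N.
Proof.
elim: l => [|b l IH] //=; case: b => /=; lia.
Qed.

Lemma admits_free x H d : 0 <= d -> admits x H d ->
  forall M, exists n, (M <= n)%N /\ freeH H n.
Proof.
move=> d0 ha M.
pose P := (M + (\max_(mb <- H) mb.1).+1)%N.
pose l := [seq ((j, true) \in H) | j <- iota 0 P].
exists (enc l); split.
  apply: leq_trans (ltnW (enc_gt l)); by rewrite size_map size_iota leq_addr.
apply/allP => [[m b]] hmb /=.
have mP : (m < P)%N.
  have := @leq_bigmax_seq _ H xpredT (fun mb => mb.1) _ hmb isT.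
  move=> /= h; rewrite /P; lia.
have sl : size l = P by rewrite size_map size_iota.
apply/andP; split.
  apply: ltn_trans (enc_gt l); by rewrite sl.
rewrite enc_bit ?sl // (nth_map 0%N) ?size_iota // nth_iota // add0n.
case: b hmb => hmb; first by rewrite hmb.
apply/eqP/negbTE/negP => ht.
have h1 := ha _ hmb; have h2 := ha _ ht; move: h1 h2; rewrite /vb /=.
rewrite subr0 => h1 h2.
have : `|x m| < 4^-1 by apply: le_lt_trans h1; rewrite lerDl.
have : `|x m - 2^-1| < 4^-1 by apply: le_lt_trans h2; rewrite lerDl.
rewrite !ltr_norml => /andP [a1 a2] /andP [b1 b2].
have e2 : (2:R)^-1 = 1/2 by rewrite div1r.
have e4 : (4:R)^-1 = 1/4 by rewrite div1r.
move: a1 a2 b1 b2; rewrite e4 e2 => *.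
lra.
Qed.


Definition nb x H (d : R) (k : nat) (f : nat -> (nat -> R) -> R) (e : R) : set (nat -> R) :=
  [set y | Bc0 y /\ (forall i, (i < k)%N -> `|f i y - f i x| < e) /\
     exists eta, 0 <= eta /\ eta < d /\ forall n, ~~ freeH H n -> `|y n - x n| <= eta].

Definition tauS : set (set (nat -> R)) :=
  [set U : set (nat -> R) | U `<=` @Bc0 R /\ forall x, U x -> exists H d k f e,
     0 < d /\ 0 < e /\ (forall i, (i < k)%N -> c0_dual (f i)) /\ admits x H d /\
     nb x H d k f e `<=` U].

Lemma Bc0_le x n : Bc0 x -> `|x n| <= 1.
Proof. by move=> [cx nx]; apply: le_trans (c0norm_ge n cx) nx. Qed.

Lemma Bc0_intro x : c0 x -> (forall n, `|x n| <= 1) -> Bc0 x.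
Proof. by move=> cx h; split => //; apply: c0norm_le. Qed.

Lemma notfree H mb : mb \in H -> ~~ freeH H mb.1.
Proof. move=> hm; apply/negP => /allP /(_ _ hm) /andP [h _]; by rewrite ltnn in h. Qed.

Lemma nb_self x H d k f e : Bc0 x -> 0 < d -> 0 < e -> nb x H d k f e x.
Proof.
move=> bx d0 e0; split=> //; split; first by move=> i _; rewrite subrr normr0.
by exists 0; split=> //; split=> // n _; rewrite subrr normr0.
Qed.

Lemma margin (k : nat) (g : nat -> R) (e : R) : 0 < e -> (forall i, (i < k)%N -> g i < e) ->
  exists e', 0 < e' /\ forall i, (i < k)%N -> g i + e' <= e.
Proof.
move=> e0; elim: k => [|k IH] h; first by exists e; split=> // i.
have [e1 [e10 H1]] := IH (fun i hi => h i (ltnW hi)).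
have hk := h k (ltnSn k).
exists (Num.min e1 (e - g k)); split; first by rewrite lt_min e10 subr_gt0.
move=> i; rewrite ltnS leq_eqVlt => /orP [/eqP ->|hi].
  by rewrite -lerBrDl ge_min lexx orbT.
apply: le_trans (H1 i hi); by rewrite lerD2l ge_min lexx.
Qed.

Lemma nb_open x H d k f e : 0 < d -> 0 < e -> (forall i, (i < k)%N -> c0_dual (f i)) ->
  admits x H d -> tauS (nb x H d k f e).
Proof.
move=> d0 e0 hf ha; split; first by move=> y [].
move=> y [By [Wy [eta [eta0 [etad Py]]]]].
have [e' [e'0 He']] := margin e0 Wy.
exists H, (d - eta), k, f, e'; split; first by rewrite subr_gt0.
split=> //; split=> //; split.
  move=> mb hmb; have := ha _ hmb; have := Py _ (notfree hmb).
  have := ler_distD (x mb.1) (y mb.1) (vb mb.2).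
  move=> t1 t2 t3; lra.
move=> z [Bz [Wz [eta2 [eta20 [eta2d Pz]]]]]; split=> //; split.
  move=> i hi; apply: le_lt_trans (ler_distD (f i y) _ _) _.
  have := He' i hi; have := Wz i hi; rewrite [`|f i y - _|]distrC; lra.
exists (eta + eta2); split; first exact: addr_ge0.
split; first by lra.
move=> n hn; apply: le_trans (ler_distD (y n) _ _) _.
have := Py n hn; have := Pz n hn; lra.
Qed.

Lemma cvx_le (a b c t : R) : 0 <= t -> t <= 1 -> `|a| <= c -> `|b| <= c ->
  `|t * a + (1 - t) * b| <= c.
Proof.
move=> t0 t1 ha hb; apply: le_trans (ler_normD _ _) _.
rewrite !normrM (ger0_norm t0) (ger0_norm (_ : 0 <= 1 - t)); last by lra.
nra.
Qed.

Lemma cvx_lt (a b c t : R) : 0 <= t -> t <= 1 -> `|a| < c -> `|b| < c ->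
  `|t * a + (1 - t) * b| < c.
Proof.
move=> t0 t1 ha hb.
have h1 : `|a| <= Num.max `|a| `|b| by rewrite le_max lexx.
have h2 : `|b| <= Num.max `|a| `|b| by rewrite le_max lexx orbT.
apply: le_lt_trans (cvx_le t0 t1 h1 h2) _; by rewrite gt_max ha hb.
Qed.

Lemma nb_convex x H d k f e : (forall i, (i < k)%N -> c0_dual (f i)) ->
  convex_set (nb x H d k f e).
Proof.
move=> hf y z t [By [Wy [e1 [e10 [e1d P1]]]]] [Bz [Wz [e2 [e20 [e2d P2]]]]] t0 t1.
have cy := By.1; have cz := Bz.1.
split.
  apply: Bc0_intro; first exact: c0_lin.
  move=> n; exact: cvx_le (Bc0_le n By) (Bc0_le n Bz).
split.
  move=> i hi; rewrite dual_lin //; last exact: hf.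
  have -> : t * f i y + (1 - t) * f i z - f i x =
    t * (f i y - f i x) + (1 - t) * (f i z - f i x) by ring.
  by apply: cvx_lt => //; [exact: Wy | exact: Wz].
exists (Num.max e1 e2); split; first by rewrite le_max e10.
split; first by rewrite gt_max e1d e2d.
move=> n hn.
have -> : t * y n + (1 - t) * z n - x n = t * (y n - x n) + (1 - t) * (z n - x n) by ring.
apply: cvx_le => //.
  apply: le_trans (P1 n hn) _; by rewrite le_max lexx.
apply: le_trans (P2 n hn) _; by rewrite le_max lexx orbT.
Qed.



Lemma nb_mono x H d k f e H2 d2 k2 f2 e2 :
  (forall n, freeH H2 n -> freeH H n) -> d2 <= d -> e2 <= e ->
  (forall i, (i < k)%N -> exists j, (j < k2)%N /\ f2 j = f i) ->
  nb x H2 d2 k2 f2 e2 `<=` nb x H d k f e.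
Proof.
move=> hH hd he hf y [By [Wy [eta [eta0 [etad Py]]]]]; split=> //; split.
  move=> i hi; have [j [hj <-]] := hf i hi; exact: lt_le_trans (Wy j hj) he.
exists eta; split=> //; split; first exact: lt_le_trans etad hd.
move=> n hn; apply: Py; apply/negP => /hH; exact/negP.
Qed.

Lemma tau_top : is_topology_on_Bc0 tauS.
Proof.
split; first by move=> U [].
split; first by split=> // x.
split.
  split=> // x bx; exists [::], 1, 0%N, (fun _ _ => 0), 1.
  by do 3 (split=> //); split=> // y [].
split.
  move=> U V [sU hU] [sV hV]; split; first by move=> y [/sU].
  move=> x [Ux Vx].
  have [H [d [k [f [e [d0 [e0 [hf [ha sub]]]]]]]]] := hU x Ux.
  have [H' [d' [k' [f' [e' [d0' [e0' [hf' [ha' sub']]]]]]]]] := hV x Vx.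
  pose F := fun i => if (i < k)%N then f i else f' (i - k)%N.
  exists (H ++ H'), (Num.min d d'), (k + k')%N, F, (Num.min e e').
  split; first by rewrite lt_min d0 d0'.
  split; first by rewrite lt_min e0 e0'.
  split.
    move=> i hi; rewrite /F; case: ifP => h; first exact: hf.
    apply: hf'; move: h hi; lia.
  split.
    move=> mb; rewrite mem_cat => /orP [h|h].
      apply: le_lt_trans (ha _ h); by rewrite lerD2l ge_min lexx.
    apply: le_lt_trans (ha' _ h); by rewrite lerD2l ge_min lexx orbT.
  move=> y hy; split.
    apply: sub; apply: nb_mono hy.
    - by move=> n; rewrite /freeH all_cat => /andP [].
    - by rewrite ge_min lexx.
    - by rewrite ge_min lexx.
    - by move=> i hi; exists i; split; [lia | rewrite /F hi].
  apply: sub'; apply: nb_mono hy.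
  - by move=> n; rewrite /freeH all_cat => /andP [].
  - by rewrite ge_min lexx orbT.
  - by rewrite ge_min lexx orbT.
  - move=> i hi; exists (k + i)%N; split; first lia.
    by rewrite /F ltnNge leq_addr /= addKn.
move=> F sF; split.
  by move=> y [U /sF [sU _] Uy]; exact: sU.
move=> x [U FU Ux]; have [_ hU] := sF U FU.
have [H [d [k [f [e [d0 [e0 [hf [ha sub]]]]]]]]] := hU x Ux.
exists H, d, k, f, e; do 4 (split=> //).
by move=> y /sub Uy; exists U.
Qed.

Lemma tau_lc : locally_convex tauS.
Proof.
move=> U x [sU hU] Ux.
have [H [d [k [f [e [d0 [e0 [hf [ha sub]]]]]]]]] := hU x Ux.
exists (nb x H d k f e); split; first exact: nb_open.
split; first exact: nb_convex.
split=> //; exact: nb_self (sU _ Ux) d0 e0.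
Qed.

Lemma tau_weak U : weak_open U -> tauS U.
Proof.
move=> [sU hU]; split=> // x Ux.
have [k [f [e [e0 [hf Hy]]]]] := hU x Ux.
exists [::], 1, k, f, e; do 4 (split=> //).
by move=> y [By [Wy _]]; apply: Hy.
Qed.


Lemma c0_sub x y : c0 x -> c0 y -> c0 (fun n => x n - y n).
Proof.
move=> cx cy; have := c0_lin 1 (-1) cx cy.
have -> : (fun n => 1 * x n + -1 * y n) = (fun n => x n - y n).
  by apply: funext => n; rewrite mul1r mulN1r.
done.
Qed.

Lemma pt_mod x H d k f e n (a : R) : Bc0 x -> 0 < d -> 0 < e -> freeH H n -> `|a| <= 1 ->
  (forall i, (i < k)%N -> c0_dual (f i)) ->
  (forall i, (i < k)%N -> `|f i (ev n)| < e / 2) ->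
  nb x H d k f e (fun j => 1 * x j + (a - x n) * ev n j).
Proof.
move=> bx d0 e0 fn ha hf hs; have cx := bx.1.
split.
  apply: Bc0_intro; first exact: c0_lin (c0_ev1 n).
  move=> j; rewrite /ev; case: eqP => [->|_]; first by rewrite mul1r mulr1 addrC subrK.
  by rewrite mulr0 addr0 mul1r; exact: Bc0_le.
split.
  move=> i hi; rewrite dual_lin //; last exact: c0_ev1; last exact: hf.
  rewrite mul1r addrAC subrr add0r normrM.
  have h1 : `|a - x n| <= 2.
    apply: le_trans (ler_normB _ _) _; have := Bc0_le n bx; lra.
  have := hs i hi; have := normr_ge0 (f i (ev n)); have := normr_ge0 (a - x n).
  move=> *; nra.
exists 0; split=> //; split=> // j hj.
have jn : j != n by apply/negP => /eqP ej; move: hj; rewrite ej fn.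
by rewrite /ev (negbTE jn) mulr0 addr0 mul1r subrr normr0.
Qed.

Lemma Bc0_dist x y : Bc0 x -> Bc0 y -> c0norm (fun n => x n - y n) <= 2.
Proof.
move=> bx by_; apply: c0norm_le => n; apply: le_trans (ler_normB _ _) _.
have := Bc0_le n bx; have := Bc0_le n by_; lra.
Qed.

Lemma tau_diam U : tauS U -> U !=set0 -> diam U = 2.
Proof.
move=> [sU hU] [x Ux].
have [H [d [k [f [e [d0 [e0 [hf [ha sub]]]]]]]]] := hU x Ux.
have bx := sU x Ux.
have [M HM] := decay_k (divr_gt0 e0 (ltr0Sn _ 1)) hf.
have [n [Mn fn]] := admits_free (ltW d0) ha M.
pose y := fun j => 1 * x j + (1 - x n) * ev n j.
pose z := fun j => 1 * x j + (-1 - x n) * ev n j.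
have hs : forall i, (i < k)%N -> `|f i (ev n)| < e / 2 by move=> i hi; exact: HM.
have Uy : U y by apply: sub; apply: pt_mod => //; rewrite normr1.
have Uz : U z by apply: sub; apply: pt_mod => //; rewrite normrN1.
have cy := (sU y Uy).1; have cz := (sU z Uz).1.
have Dyz : c0norm (fun j => y j - z j) = 2.
  apply/le_anti/andP; split; first exact: Bc0_dist (sU y Uy) (sU z Uz).
  have := c0norm_ge n (c0_sub cy cz).
  have -> : y n - z n = 2 by rewrite /y /z /ev eqxx; ring.
  by rewrite ger0_norm.
apply/le_anti/andP; split.
  apply: ge_sup; first by exists (c0norm (fun j => x j - x j)), x, x.
  by move=> _ [u [v [Uu [Uv ->]]]]; apply: Bc0_dist; apply: sU.
apply: ub_le_sup.
  by exists 2 => _ [u [v [Uu [Uv ->]]]]; apply: Bc0_dist; apply: sU.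
by exists y, z.
Qed.


Lemma notin_max (S : seq nat) n : (\max_(t <- S) t < n)%N -> n \notin S.
Proof.
move=> hn; apply/negP => nS; have := @leq_bigmax_seq _ S xpredT (fun t => t) n nS isT.
by rewrite leqNgt hn.
Qed.

Lemma tau_sr : strongly_regular_open tauS.
Proof.
move=> O [sO hO] [x Ox] _ e e0.
have [H [d [k [f [eps [d0 [eps0 [hf [ha sub]]]]]]]]] := hO x Ox.
have bx := sO x Ox; have cx := bx.1.
pose K := (Num.Def.archi_bound (8 / e)).+1.
have K0 : (0 < K)%N by [].
have KR : 0 < K%:R :> R by rewrite ltr0n.
have hK : 8 / e < K%:R :> R.
  apply: lt_trans (archi_boundP _) _; first by apply: divr_ge0 => //; exact: ltW.
  by rewrite ltr_nat.
pose dl := Num.min d (Num.min (e / 8) (1 / 8)).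
have dl0 : 0 < dl by rewrite !lt_min d0 !divr_gt0.
have dld : dl <= d by rewrite ge_min lexx.
have dle : dl <= e / 8 by rewrite ge_min !ge_min lexx orbT.
have dl8 : dl <= 1 / 8 by rewrite ge_min !ge_min lexx !orbT.
have eps1 : 0 < eps / (4 * K%:R) by rewrite divr_gt0 // mulr_gt0.
have [M HM] := decay_k eps1 hf.
have [g hg] := choice (admits_free (ltW d0) ha).
pose m := fun j => iter j (fun a => g a.+1) (g M).
have mS : forall j, (m j < m j.+1)%N.
  by move=> j; rewrite /m iterS; exact: (hg _).1.
have minj := incr_inj mS.
have mle := ltnW_homo (homo_ltn ltn_trans mS).
have mM : forall j, (M <= m j)%N.
  move=> j; apply: leq_trans (mle 0%N j (leq0n j)); exact: (hg M).1.
have mF : forall j, freeH H (m j).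
  by case=> [|j]; rewrite /m ?iterS; [exact: (hg M).2 | exact: (hg _).2].
pose T := map m (iota 0 K).
have uT : uniq T by rewrite map_inj_uniq // iota_uniq.
have TF : forall n, n \in T -> freeH H n by move=> n /mapP [j _ ->].
have TM : forall n, n \in T -> (M <= n)%N by move=> n /mapP [j _ ->].
have sT : size T = K by rewrite size_map size_iota.
pose xi := fun (i : nat) n => if n \in T then vb (n == m i) else x n.
pose Hi := fun (i : nat) => H ++ [seq (m j, j == i) | j <- iota 0 K].
pose W := fun i => nb (xi i) (Hi i) dl 0 f 1.
have vb1 : forall b, `|vb b| <= 2^-1.
  by case; rewrite /vb ?normr0 ?invr_ge0 // ger0_norm // invr_ge0.
have h2 : (2:R)^-1 <= 1 by rewrite invf_le1 // ler1n.
have xiB : forall i, Bc0 (xi i).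
  move=> i; apply: Bc0_intro.
    apply: (c0_ev (N := (\max_(t <- T) t).+1) cx) => n hn.
    by rewrite /xi (negbTE (notin_max hn)).
  move=> n; rewrite /xi; case: (n \in T); last exact: Bc0_le.
  exact: le_trans (vb1 _) h2.
have xiN : forall i, nb x H d k f eps (xi i).
  move=> i; split; first exact: xiB.
  split.
    move=> l hl; rewrite -dual_sub //; [|exact: hf|exact: (xiB i).1].
    rewrite (dual_fin (S := T)) //; last first.
      by move=> n nT; rewrite /xi (negbTE nT) subrr.
      exact: hf.
    apply: le_lt_trans (ler_norm_sum _ _ _) _.
    apply: le_lt_trans (_ : _ <= \sum_(t <- T) (2 * (eps / (4 * K%:R)))) _.
      rewrite big_seq [leRHS]big_seq; apply: ler_sum => t tT; rewrite normrM.
      have h1 : `|xi i t - x t| <= 2.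
        apply: le_trans (ler_normB _ _) _; have := Bc0_le t (xiB i); have := Bc0_le t bx; lra.
      have := HM l t hl (TM t tT).
      have := normr_ge0 (f l (ev t)); have := normr_ge0 (xi i t - x t); move=> *; nra.
    rewrite sum_const_seq sT.
    have -> : K%:R * (2 * (eps / (4 * K%:R))) = eps / 2.
      by field; rewrite pnatr_eq0 -lt0n.
    lra.
  exists 0; split=> //; split=> // n hn.
  have nT : n \notin T by apply/negP => /TF; apply/negP.
  by rewrite /xi (negbTE nT) subrr normr0.
have xiA : forall i, admits (xi i) (Hi i) dl.
  move=> i mb; rewrite mem_cat => /orP [hm|].
    have nT : mb.1 \notin T by apply/negP => /TF; apply/negP; exact: notfree.
    rewrite /xi (negbTE nT); apply: le_lt_trans (ha _ hm); by rewrite lerD2l.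
  move=> /mapP [j jK ->] /=.
  rewrite /xi (map_f m jK) (inj_eq minj) subrr normr0 add0r.
  apply: le_lt_trans dl8 _; lra.
have disj : forall i j n, (i < K)%N -> (j < K)%N -> freeH (Hi i) n -> freeH (Hi j) n -> i = j.
  move=> i j n iK jK /allP fi /allP fj.
  have m1 : (m i, i == i) \in Hi i by rewrite mem_cat; apply/orP; right; apply: map_f; rewrite mem_iota.
  have m2 : (m i, i == j) \in Hi j by rewrite mem_cat; apply/orP; right; apply: map_f; rewrite mem_iota.
  move: (fi _ m1) (fj _ m2) => /= /andP [_ /eqP b1] /andP [_ /eqP b2].
  by apply/eqP; rewrite -b2 b1 eqxx.
exists K, (fun _ => K%:R^-1), (fun i => O `&` W i).
split; first by move=> i _; rewrite invr_ge0 ler0n.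
split.
  rewrite sumr_const card_ord; rewrite -[X in X = _]mulr_natr mulVf //; by rewrite pnatr_eq0 -lt0n.
split.
  move=> i iK; split.
    exists (W i); split=> //; apply: nb_open => //; exact: xiA.
  exists (xi i); split; first exact: sub.
  exact: nb_self (xiB i) dl0 ltr01.
apply: le_lt_trans (_ : _ <= e / 2) _; last by lra.
apply: ge_sup.
  pose z0 := fun n => \sum_(i < K) K%:R^-1 * xi i n.
  have mz : mink_comb K (fun _ => K%:R^-1) (fun i => O `&` W i) z0.
    exists xi; split=> // i iK; split; first exact: sub.
    exact: nb_self (xiB i) dl0 ltr01.
  by exists (c0norm (fun n => z0 n - z0 n)), z0, z0.
move=> _ [z [z' [[u [Hu ->]] [[u' [Hu' ->]] ->]]]].
apply: c0norm_le => n.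
rewrite -sumrB; under eq_bigr do rewrite -mulrBr.
rewrite -mulr_sumr normrM ger0_norm ?invr_ge0 ?ler0n //.
have [i0 hi0] : exists i0 : 'I_K, forall i : 'I_K, i != i0 -> ~~ freeH (Hi i) n.
  case: (pselect (exists i0 : 'I_K, freeH (Hi i0) n)) => [[i0 fi0]|nf].
    exists i0 => i ne; apply/negP => fi; move/negP: ne; apply; apply/eqP/val_inj.
    exact: disj (ltn_ord i) (ltn_ord i0) fi fi0.
  exists (Ordinal K0) => i _; apply/negP => fi; apply: nf; by exists i.
have term : forall i : 'I_K, `|u i n - u' i n| <= 2 * dl + (if i == i0 then 2 else 0).
  move=> i; have [Ou Wu] := Hu i (ltn_ord i); have [Ou' Wu'] := Hu' i (ltn_ord i).
  case: eqP => [_|ne].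
    apply: le_trans (ler_normB _ _) _.
    have := Bc0_le n (sO _ Ou); have := Bc0_le n (sO _ Ou'); lra.
  have nf := hi0 i (introN eqP ne).
  have [_ [_ [eta [_ [etad Pu]]]]] := Wu; have [_ [_ [eta' [_ [etad' Pu']]]]] := Wu'.
  apply: le_trans (ler_distD (xi i n) _ _) _.
  have := Pu n nf; have := Pu' n nf; rewrite [`|xi i n - _|]distrC; lra.
have key : \sum_(i < K) `|u i n - u' i n| <= 2 + K%:R * (2 * dl).
  apply: le_trans (ler_sum _ (fun i _ => term i)) _.
  rewrite big_split /= sumr_const card_ord -big_mkcond big_pred1_eq -mulr_natl; lra.
have h8 : 8 < K%:R * e by rewrite -ltr_pdivrMr.
have hinv : K%:R^-1 * K%:R = 1 :> R by rewrite mulVf // pnatr_eq0 -lt0n.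
have hi : 0 < K%:R^-1 :> R by rewrite invr_gt0.
apply: le_trans (ler_wpM2l (ltW hi) (le_trans (ler_norm_sum _ _ _) key)) _.
have -> : K%:R^-1 * (2 + K%:R * (2 * dl)) = 2 * K%:R^-1 + 2 * dl by field; rewrite pnatr_eq0 -lt0n.
have : 8 * K%:R^-1 < e.
  nra.
lra.
Qed.

End S.

Theorem theorem3p2 (R : realType) :
  exists tau : set (set (nat -> R)),
    is_topology_on_Bc0 tau /\
    locally_convex tau /\
    (forall U, weak_open U -> tau U) /\
    strongly_regular_open tau /\
    (forall U, tau U -> U !=set0 -> diam U = 2).
Proof.
exists (@tauS R); split; first exact: tau_top.
split; first exact: tau_lc.
split; first exact: tau_weak.
split; first exact: tau_sr.
exact: tau_diam.
Qed.
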